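(* Let $\mathcal U$ be a finite nonempty set, $\epsilon_1,\epsilon_2\in(0,1]$, $n_b$ a positive integer, and for each $v\in\mathcal U$ let $a_v\ge0$ be an integer, $\mu_v\in\mathbb R$ and $\sigma_v^2\ge0$. For $p\in I:=[\max\{\epsilon_1,\epsilon_2\},1]$ define $$h_v(p)=\Big(\frac1{\epsilon_2}-\frac1p\Big)a_v^2\mu_v^2n_b+\Big(\frac1{\epsilon_1}-\frac1p\Big)a_v(\mu_v^2+\sigma_v^2)n_b^2+\Big(\frac{p}{\epsilon_1\epsilon_2}-\frac1{\epsilon_1}-\frac1{\epsilon_2}+\frac1p\Big)a_v(\mu_v^2+\sigma_v^2)n_b+\Big(\frac1p-1\Big)a_v^2\mu_v^2n_b^2,$$ $h^*(p)=\max_{v\in\mathcal U}h_v(p)$, and $h'(p)=\max\{h_{v_1}(p),h_{v_2}(p)\}$, where $v_1\in\arg\max_v a_v^2\mu_v^2$ and $v_2\in\arg\max_v a_v(\mu_v^2+\sigma_v^2)$. Let $p'\in\arg\min_{p\in I}h'(p)$ and $p^*\in\arg\min_{p\in I}h^*(p)$. Then $h^*(p')\le 2h^*(p^* )$.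
   Context: Interpretation: $h_v(p)$ is the variance of the SUM join estimator when both tables use universe sampling rate $p$ and uniform sampling rates $\epsilon_1/p$, $\epsilon_2/p$, and all $n_b$ tuples of the second table have join value $v$; $a_v$ is the number of tuples of the first table with join value $v$, and $\mu_v,\sigma_v^2$ are the mean and variance of the aggregated column over those tuples. $h^*$ is the worst-case variance over such concentrated second tables. *)

(* Defs.v *)
From HB Require Import structures.
From mathcomp Require Import all_boot all_order all_algebra.
Set Implicit Arguments. Unset Strict Implicit. Unset Printing Implicit Defensive.
Import Order.TTheory GRing.Theory Num.Theory.
Local Open Scope ring_scope.

(* h_v(p): variance of the SUM join estimator when the second table is
   concentrated on join value v. a = a_v, mu = mu_v, s2 = sigma_v^2, nb = n_b. *)
Definition hv {R : realFieldType} (e1 e2 : R) (nb : nat) (a : nat) (mu s2 : R)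
    (p : R) : R :=
  (e2^-1 - p^-1) * (a%:R ^+ 2) * (mu ^+ 2) * nb%:R
  + (e1^-1 - p^-1) * a%:R * (mu ^+ 2 + s2) * (nb%:R ^+ 2)
  + (p / (e1 * e2) - e1^-1 - e2^-1 + p^-1) * a%:R * (mu ^+ 2 + s2) * nb%:R
  + (p^-1 - 1) * (a%:R ^+ 2) * (mu ^+ 2) * (nb%:R ^+ 2).

(* h^*(p) = max_{v in U} h_v(p); the fold is seeded with h_{v0}(p) for some
   v0 in U (U nonempty), so it is exactly the maximum over U. *)
Definition hstar {R : realFieldType} {U : finType} (v0 : U) (e1 e2 : R) (nb : nat)
    (a : U -> nat) (mu s2 : U -> R) (p : R) : R :=
  \big[Num.max/hv e1 e2 nb (a v0) (mu v0) (s2 v0) p]_(v : U)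
     hv e1 e2 nb (a v) (mu v) (s2 v) p.

(* Main.v *)
Require Import Defs.
From HB Require Import structures.
From mathcomp Require Import all_boot all_order all_algebra.
From mathcomp Require Import ring lra.
Import Order.TTheory GRing.Theory Num.Theory.
Local Open Scope ring_scope.

Lemma big_max_ge (R : realFieldType) (I : eqType) (F : I -> R) x0 (r : seq I) v :
  v \in r -> F v <= \big[Num.max/x0]_(i <- r) F i.
Proof.
elim: r => [//|y r IH]; rewrite inE big_cons => /orP [/eqP->|/IH H].
  by rewrite le_max lexx.
by rewrite le_max H orbT.
Qed.

Lemma big_max_le (R : realFieldType) (I : Type) (F : I -> R) x0 (r : seq I) (P : pred I) c :
  x0 <= c -> (forall i, P i -> F i <= c) -> \big[Num.max/x0]_(i <- r | P i) F i <= c.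
Proof.
move=> H0 HF; apply: (big_ind (fun x => x <= c)) => //.
by move=> x y Hx Hy; rewrite ge_max Hx Hy.
Qed.

Section S.
Variables (R : realFieldType) (e1 e2 : R) (nb : nat).

Definition cA (p : R) := (e2^-1 - p^-1) * nb%:R + (p^-1 - 1) * (nb%:R ^+ 2).
Definition cB (p : R) := (e1^-1 - p^-1) * (nb%:R ^+ 2)
  + (p / (e1 * e2) - e1^-1 - e2^-1 + p^-1) * nb%:R.

Lemma hv_dec a mu s2 p : hv e1 e2 nb a mu s2 p =
  cA p * (a%:R ^+ 2 * mu ^+ 2) + cB p * (a%:R * (mu ^+ 2 + s2)).
Proof. rewrite /hv /cA /cB; ring. Qed.

Hypotheses (he1 : 0 < e1 <= 1) (he2 : 0 < e2 <= 1).

Lemma inv_sub_ge0 (x p : R) : 0 < x -> x <= p -> 0 <= x^-1 - p^-1.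
Proof.
move=> hx hxp; have hp : 0 < p by apply: lt_le_trans hxp.
rewrite subr_ge0 lef_pV2 ?posrE //.
Qed.

Lemma cA_ge0 p : Num.max e1 e2 <= p <= 1 -> 0 <= cA p.
Proof.
case/andP: he1 => h1 _; case/andP: he2 => h2 _.
rewrite ge_max => /andP [/andP [hp1 hp2] hp].
have p0 : 0 < p by apply: lt_le_trans hp2.
apply: addr_ge0; apply: mulr_ge0 => //.
  exact: inv_sub_ge0.
  rewrite subr_ge0 -invr1 lef_pV2 ?posrE //.
by rewrite exprn_ge0.
Qed.

Lemma cB_ge0 p : Num.max e1 e2 <= p <= 1 -> 0 <= cB p.
Proof.
case/andP: he1 => h1 _; case/andP: he2 => h2 _.
rewrite ge_max => /andP [/andP [hp1 hp2] hp].
have p0 : 0 < p by apply: lt_le_trans hp2.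
apply: addr_ge0; apply: mulr_ge0 => //.
  exact: inv_sub_ge0. all: try by rewrite exprn_ge0.
have -> : p / (e1 * e2) - e1^-1 - e2^-1 + p^-1 = (p - e1) * (p - e2) / (p * e1 * e2).
  field; rewrite ?mulf_neq0 ?gt_eqF //.
apply: divr_ge0; first by apply: mulr_ge0; rewrite subr_ge0.
by rewrite !mulr_ge0 // ltW.
Qed.
End S.

Theorem corollary2 (R : realFieldType) (U : finType) (v0 : U)
    (e1 e2 : R) (nb : nat) (a : U -> nat) (mu s2 : U -> R)
    (v1 v2 : U) (p' pstar : R) :
  0 < e1 <= 1 -> 0 < e2 <= 1 -> (0 < nb)%N ->
  (forall v, 0 <= s2 v) ->
  (forall v, (a v)%:R ^+ 2 * mu v ^+ 2 <= (a v1)%:R ^+ 2 * mu v1 ^+ 2) ->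
  (forall v, (a v)%:R * (mu v ^+ 2 + s2 v) <= (a v2)%:R * (mu v2 ^+ 2 + s2 v2)) ->
  let h v p := hv e1 e2 nb (a v) (mu v) (s2 v) p in
  let hs p := hstar v0 e1 e2 nb a mu s2 p in
  let h' p := Num.max (h v1 p) (h v2 p) in
  let inI p := Num.max e1 e2 <= p <= 1 in
  inI p' -> (forall p, inI p -> h' p' <= h' p) ->
  inI pstar -> (forall p, inI p -> hs pstar <= hs p) ->
  hs p' <= 2 * hs pstar.
Proof.
move=> he1 he2 hnb hs2 hA hB h hs h' inI Ip' Hp' Ips Hps.
have Bge0 : forall v, 0 <= (a v)%:R * (mu v ^+ 2 + s2 v) :> R.
  by move=> v; rewrite mulr_ge0 // addr_ge0 // sqr_ge0.
have Age0 : forall v, 0 <= (a v)%:R ^+ 2 * mu v ^+ 2 :> R.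
  by move=> v; rewrite mulr_ge0 // sqr_ge0.
have up : forall p, inI p -> hs p <= 2 * h' p.
  move=> p Ip.
  have key : forall v, h v p <= 2 * h' p.
    move=> v; rewrite /h' /h.
    have cA0 := @cA_ge0 R e1 e2 nb he1 he2 p Ip; have cB0 := @cB_ge0 R e1 e2 nb he1 he2 p Ip.
    have m1 : hv e1 e2 nb (a v1) (mu v1) (s2 v1) p <= Num.max (h v1 p) (h v2 p)
      by rewrite le_max lexx.
    have m2 : hv e1 e2 nb (a v2) (mu v2) (s2 v2) p <= Num.max (h v1 p) (h v2 p)
      by rewrite le_max lexx orbT.
    move: m1 m2; rewrite /h !hv_dec => m1 m2.
    have t1 := ler_wpM2l cA0 (hA v); have t2 := ler_wpM2l cB0 (hB v).
    have t3 := mulr_ge0 cA0 (Age0 v2); have t4 := mulr_ge0 cB0 (Bge0 v1).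
    lra.
  rewrite /hs /hstar; apply: big_max_le => [|i _]; exact: key.
have low : forall p, h' p <= hs p.
  move=> p; rewrite /h' ge_max /hs /hstar /h.
  apply/andP; split.
    exact: (@big_max_ge _ _ (fun v => hv e1 e2 nb (a v) (mu v) (s2 v) p) _ _ _ (mem_index_enum v1)).
  exact: (@big_max_ge _ _ (fun v => hv e1 e2 nb (a v) (mu v) (s2 v) p) _ _ _ (mem_index_enum v2)).
apply: (le_trans (up _ Ip')).
rewrite ler_pM2l ?ltr0n //.
exact: le_trans (Hp' _ Ips) (low _).
Qed.
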